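(* $$\sum_{n=1}^\infty \frac{H_n \binom{2n}{n}}{n(n+1)\, 2^{2n}} = \frac{\pi^2}{3} - 4\log 2.$$
   Context: $H_n=\sum_{k=1}^n \frac{1}{k}$ denotes the $n$-th harmonic number and $\binom{2n}{n}$ the central binomial coefficient; $\log$ is the natural logarithm. *)

(* Defs.v *)
From Stdlib Require Import Reals.
From Coquelicot Require Import Coquelicot.
Open Scope R_scope.

Definition harmonic (n : nat) : R :=
  sum_n_m (fun k => / INR k) 1 n.

Definition central_binom (n : nat) : R := Binomial.C (2 * n) n.

(* summand for n >= 1; the series index starts at n = 1 *)
Definition summand (n : nat) : R :=
  harmonic n * central_binom n / (INR n * (INR n + 1) * 2 ^ (2 * n)).

(* Main.v *)
Require Import Defs.
From Stdlib Require Import Reals Lra Lia.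
From Coquelicot Require Import Coquelicot.
Open Scope R_scope.

Fixpoint cc (n : nat) : R := match n with O => 1 | S m => cc m * (2 * INR m + 1) / (2 * INR m + 2) end.

Lemma cc_S n : cc (S n) = cc n * (2 * INR n + 1) / (2 * INR n + 2).
Proof. reflexivity. Qed.

Lemma cc_pos n : 0 < cc n.
Proof. induction n; simpl. lra. pose proof (pos_INR n).
  apply Rmult_lt_0_compat. apply Rmult_lt_0_compat; lra. apply Rinv_0_lt_compat; lra. Qed.

Lemma cc_S' n : (2 * INR n + 2) * cc (S n) = (2 * INR n + 1) * cc n.
Proof. rewrite cc_S. pose proof (pos_INR n). field. lra. Qed.

Fixpoint sumR (a : nat -> R) (N : nat) : R := match N with O => 0 | S m => sumR a m + a m end.

Lemma sum_n_sumR a N : sum_n a N = sumR a (S N).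
Proof. induction N. rewrite sum_O. simpl. rewrite Rplus_0_l. reflexivity.
  rewrite sum_Sn, IHN. reflexivity. Qed.

Lemma is_series_sumR a (l : R) : is_lim_seq (sumR a) l -> is_series a l.
Proof. intros H. apply is_lim_seq_incr_1 in H.
  eapply is_lim_seq_ext in H. exact H. intros n. simpl. rewrite sum_n_sumR. reflexivity. Qed.

Lemma sumR_ext a b N : (forall n, (n < N)%nat -> a n = b n) -> sumR a N = sumR b N.
Proof. induction N; intros H; simpl. auto. rewrite IHN. rewrite H. auto. lia. intros; apply H; lia. Qed.

Lemma sumR_plus a b N : sumR (fun n => a n + b n) N = sumR a N + sumR b N.
Proof. induction N; simpl. ring. rewrite IHN; ring. Qed.
Lemma sumR_scal k a N : sumR (fun n => k * a n) N = k * sumR a N.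
Proof. induction N; simpl. ring. rewrite IHN; ring. Qed.
Lemma sumR_minus a b N : sumR (fun n => a n - b n) N = sumR a N - sumR b N.
Proof. induction N; simpl. ring. rewrite IHN; ring. Qed.
Lemma sumR_tele a N : sumR (fun n => a n - a (S n)) N = a O - a N.
Proof. induction N; simpl. ring. rewrite IHN; ring. Qed.
Lemma sumR_nonneg a N : (forall n, 0 <= a n) -> 0 <= sumR a N.
Proof. intros H; induction N; simpl. lra. specialize (H N). lra. Qed.
Lemma sumR_le a b N : (forall n, a n <= b n) -> sumR a N <= sumR b N.
Proof. intros H; induction N; simpl. lra. specialize (H N). lra. Qed.
Lemma sumR_mono a N M : (forall n, 0 <= a n) -> (N <= M)%nat -> sumR a N <= sumR a M.
Proof. intros H HNM. induction HNM. lra. simpl. specialize (H m). lra. Qed.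

Lemma deriv_eq (f : R -> R) (x l l' : R) : is_derive f x l -> l = l' -> is_derive f x l'.
Proof. intros H ->; exact H. Qed.

Lemma D_sinpow n (x : R) : is_derive (fun x => sin x ^ S n) x (INR (S n) * cos x * sin x ^ n).
Proof. eapply deriv_eq. apply is_derive_pow. apply is_derive_sin. simpl. ring. Qed.

Lemma deriv_ext (f g : R -> R) (x l : R) : (forall t : R, f t = g t) -> is_derive f x l -> is_derive g x l.
Proof. intros H. apply is_derive_ext. exact H. Qed.

Lemma eq_from_sub (a b : R) : a - b = 0 -> a = b.
Proof. intros; lra. Qed.

Lemma is_series_scal' (c : R) (a : nat -> R) (l : R) : is_series a l -> is_series (fun n => c * a n) (c * l).
Proof. intros H. apply (is_series_scal (K:=R_AbsRing) (V:=R_NormedModule) c a l H). Qed.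
Lemma is_series_plus' (a b : nat -> R) (la lb : R) : is_series a la -> is_series b lb -> is_series (fun n => a n + b n) (la + lb).
Proof. intros H1 H2. apply (is_series_plus (K:=R_AbsRing) (V:=R_NormedModule) a b la lb H1 H2). Qed.
Lemma is_series_minus'' (a b : nat -> R) (la lb : R) : is_series a la -> is_series b lb -> is_series (fun n => a n - b n) (la - lb).
Proof. intros H1 H2. apply (is_series_minus (K:=R_AbsRing) (V:=R_NormedModule) a b la lb H1 H2). Qed.
Lemma is_series_ext' (a b : nat -> R) (l : R) : (forall n, a n = b n) -> is_series a l -> is_series b l.
Proof. intros H. apply (is_series_ext (K:=R_AbsRing) (V:=R_NormedModule)). exact H. Qed.
Lemma is_series_val (a : nat -> R) (l l' : R) : is_series a l -> l = l' -> is_series a l'.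
Proof. intros H ->; exact H. Qed.

Lemma ex_derive_ext' (f g : R -> R) (x : R) : (forall t : R, f t = g t) -> ex_derive f x -> ex_derive g x.
Proof. intros H. apply ex_derive_ext. exact H. Qed.

Lemma sumR_zero N : sumR (fun _ => 0) N = 0.
Proof. induction N; simpl. auto. rewrite IHN; ring. Qed.
Lemma series_zero : is_series (fun _ => 0) 0.
Proof. apply is_series_sumR. apply is_lim_seq_ext with (fun _ => 0). intros; rewrite sumR_zero; auto. apply is_lim_seq_const. Qed.

Definition Pc (N : nat) (x : R) : R := sumR (fun n => cc n * sin x ^ (2*n)) N.
Definition rr (N : nat) (x : R) : R := 1 - cos x * Pc N x.

Lemma Pc_S N x : Pc (S N) x = Pc N x + cc N * sin x ^ (2*N).
Proof. reflexivity. Qed.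
Lemma Pc_0 x : Pc 0 x = 0.
Proof. reflexivity. Qed.

Lemma pow_SS (s : R) k : s ^ S k = s * s ^ k.
Proof. reflexivity. Qed.

Lemma cos2 x : cos x * cos x = 1 - sin x * sin x.
Proof. pose proof (sin2_cos2 x). unfold Rsqr in H. lra. Qed.

Ltac trig_close K x :=
  match goal with |- ?L = ?R => transitivity (R + K * (cos x * cos x - (1 - sin x * sin x))); [ | rewrite cos2; ring ] end.

Lemma D_cosPc m (x : R) : is_derive (fun x => cos x * Pc (S m) x) x
   (- (2 * INR m + 2) * cc (S m) * sin x ^ (2*m+1)).
Proof.
  induction m.
  - eapply deriv_ext with (f := fun x => cos x).
    { intros t. rewrite Pc_S, Pc_0. simpl. ring. }
    eapply deriv_eq. apply is_derive_cos. simpl. field.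
  - eapply deriv_ext with (f := fun x => cos x * Pc (S m) x + cc (S m) * (cos x * sin x ^ (S (2*m+1)))).
    { intros t. rewrite (Pc_S (S m)). replace (2 * S m)%nat with (S (2*m+1)) by lia. ring. }
    eapply deriv_eq.
    + apply (is_derive_plus (fun x => cos x * Pc (S m) x)). exact IHm.
      apply is_derive_scal. apply (is_derive_mult cos (fun x => sin x ^ S (2*m+1))).
      apply is_derive_cos. apply D_sinpow. intros; apply Rmult_comm.
    + replace (2 * S m + 1)%nat with (S (S (2*m+1))) by lia.
      rewrite !pow_SS. rewrite (cc_S (S m)). rewrite !S_INR.
      replace (2*m+1)%nat with (S (2*m)) by lia. rewrite S_INR. rewrite mult_INR. simpl INR.
      unfold plus, mult; simpl.
      pose proof (pos_INR m).
      trig_close (cc m * (2 * INR m + 1) / (2 * INR m + 2) * (2 * INR m + 2) * (sin x * sin x ^ (m + (m + 0)))) x.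
      field. lra.
Qed.

Lemma FTC (f df : R -> R) (a b : R) : a <= b ->
  (forall x, a <= x <= b -> is_derive f x (df x)) ->
  (forall x, a <= x <= b -> continuous df x) -> is_RInt df a b (f b - f a).
Proof.
  intros Hab Hd Hc. apply (is_RInt_derive f df a b).
  - intros x Hx. rewrite Rmin_left, Rmax_right in Hx by lra. auto.
  - intros x Hx. rewrite Rmin_left, Rmax_right in Hx by lra. auto.
Qed.

Lemma is_RInt_nonneg (f : R -> R) (a b v : R) : a <= b -> is_RInt f a b v -> (forall x, a < x < b -> 0 <= f x) -> 0 <= v.
Proof. intros Hab H Hp.
  assert (H0 := is_RInt_const a b 0).
  replace 0 with (scal (b - a) 0 : R) at 1 by (unfold scal; simpl; unfold mult; simpl; ring).
  eapply is_RInt_le; eauto. Qed.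

Lemma mono (f df : R -> R) (a b : R) : a <= b ->
  (forall x, a <= x <= b -> is_derive f x (df x)) ->
  (forall x, a <= x <= b -> continuous df x) ->
  (forall x, a <= x <= b -> 0 <= df x) -> f a <= f b.
Proof. intros Hab Hd Hc Hp.
  assert (H := FTC f df a b Hab Hd Hc).
  assert (0 <= f b - f a). eapply is_RInt_nonneg; eauto. intros; apply Hp; lra. lra. Qed.

Lemma cont_deriv (f : R -> R) (x : R) : ex_derive f x -> continuous f x.
Proof. intros H. apply (ex_derive_continuous (K:=R_AbsRing) (V:=R_NormedModule)). exact H. Qed.

Lemma is_RInt_zero a b : is_RInt (fun _ => 0) a b 0.
Proof. assert (H := is_RInt_const (V:=R_NormedModule) a b 0).
  unfold scal in H; simpl in H; unfold mult in H; simpl in H. rewrite Rmult_0_r in H. exact H. Qed.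

Lemma is_RInt_plus' (f g : R -> R) (a b u v : R) : is_RInt f a b u -> is_RInt g a b v -> is_RInt (fun x => f x + g x) a b (u + v).
Proof. intros. apply (is_RInt_plus (V:=R_NormedModule) f g a b u v); auto. Qed.
Lemma is_RInt_minus' (f g : R -> R) (a b u v : R) : is_RInt f a b u -> is_RInt g a b v -> is_RInt (fun x => f x - g x) a b (u - v).
Proof. intros. apply (is_RInt_minus (V:=R_NormedModule) f g a b u v); auto. Qed.
Lemma is_RInt_scal' (f : R -> R) (a b k u : R) : is_RInt f a b u -> is_RInt (fun x => k * f x) a b (k * u).
Proof. intros. apply (is_RInt_scal (V:=R_NormedModule) f a b k u); auto. Qed.
Lemma is_RInt_ext' (f g : R -> R) (a b u : R) : a <= b -> (forall x, a <= x <= b -> f x = g x) -> is_RInt f a b u -> is_RInt g a b u.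
Proof. intros Hab H. apply is_RInt_ext. intros x Hx. rewrite Rmin_left, Rmax_right in Hx by lra. apply H; lra. Qed.
Lemma is_RInt_val (f : R -> R) (a b u v : R) : is_RInt f a b u -> u = v -> is_RInt f a b v.
Proof. intros H ->; exact H. Qed.

Lemma is_RInt_sumR (f : nat -> R -> R) (v : nat -> R) (a b : R) N :
  (forall n, (n < N)%nat -> is_RInt (f n) a b (v n)) ->
  is_RInt (fun x => sumR (fun n => f n x) N) a b (sumR v N).
Proof. induction N; intros H; simpl.
  - apply is_RInt_zero.
  - apply is_RInt_plus'. apply IHN. intros; apply H; lia. apply H; lia. Qed.

Lemma sin_bounds x : 0 <= x <= PI/2 -> 0 <= sin x <= 1.
Proof. intros H. split. apply sin_ge_0; lra. apply SIN_bound. Qed.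
Lemma cos_nonneg x : 0 <= x <= PI/2 -> 0 <= cos x.
Proof. intros H. apply cos_ge_0; lra. Qed.
Lemma PI2_pos : 0 < PI/2.
Proof. pose proof PI2_1; lra. Qed.

Lemma is_RInt_uniq (f : R -> R) (a b u v : R) : is_RInt f a b u -> is_RInt f a b v -> u = v.
Proof. intros H1 H2. apply (is_RInt_unique (V:=R_CompleteNormedModule)) in H1. apply (is_RInt_unique (V:=R_CompleteNormedModule)) in H2. congruence. Qed.

Lemma cont_sinpow k x : continuous (fun x => sin x ^ k) x.
Proof. apply cont_deriv. auto_derive. auto. Qed.
Lemma cont_cossinpow k x : continuous (fun x => cos x * sin x ^ k) x.
Proof. apply cont_deriv. auto_derive. auto. Qed.

Lemma I1 m : is_RInt (fun x => cos x * sin x ^ m) 0 (PI/2) (/ INR (S m)).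
Proof.
  eapply is_RInt_val.
  apply (FTC (fun x => / INR (S m) * sin x ^ S m)). pose proof PI2_pos; lra.
  - intros x _. eapply deriv_eq. apply is_derive_scal. apply D_sinpow.
    field. apply not_0_INR. lia.
  - intros; apply cont_cossinpow.
  - rewrite sin_PI2, sin_0. rewrite pow1, pow_i by lia. ring.
Qed.

Lemma Wrec m : is_RInt (fun x => INR (S (S m)) * sin x ^ S (S m) - INR (S m) * sin x ^ m) 0 (PI/2) 0.
Proof.
  eapply is_RInt_val.
  apply (FTC (fun x => - (cos x * sin x ^ S m))). pose proof PI2_pos; lra.
  - intros x _. eapply deriv_eq. apply (is_derive_opp (fun x => cos x * sin x ^ S m)).
    apply (is_derive_mult cos (fun x => sin x ^ S m)). apply is_derive_cos. apply D_sinpow.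
    intros; apply Rmult_comm.
    rewrite !S_INR. unfold opp, plus, mult; simpl.
    trig_close (- (INR m + 1) * sin x ^ m) x. ring.
  - intros. apply cont_deriv. auto_derive. auto.
  - rewrite cos_PI2, cos_0, sin_0. simpl. ring.
Qed.

Definition W k := RInt (fun x => sin x ^ k) 0 (PI/2).
Lemma Wis k : is_RInt (fun x => sin x ^ k) 0 (PI/2) (W k).
Proof. apply (RInt_correct (V:=R_CompleteNormedModule)). apply (ex_RInt_continuous (V:=R_CompleteNormedModule)).
  intros; apply cont_sinpow. Qed.

Lemma W_rec m : INR (S (S m)) * W (S (S m)) = INR (S m) * W m.
Proof.
  assert (H := is_RInt_minus' _ _ _ _ _ _ (is_RInt_scal' _ _ _ (INR (S (S m))) _ (Wis (S (S m))))
     (is_RInt_scal' _ _ _ (INR (S m)) _ (Wis m))).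
  assert (E := is_RInt_uniq _ _ _ _ _ H (Wrec m)). lra. Qed.

Lemma W1 : W 1 = 1.
Proof.
  apply (is_RInt_uniq (fun x => sin x ^ 1) 0 (PI/2)). apply Wis.
  eapply is_RInt_val. apply (FTC (fun x => - cos x)). pose proof PI2_pos; lra.
  - intros x _. eapply deriv_eq. apply (is_derive_opp cos). apply is_derive_cos. unfold opp; simpl. ring.
  - intros. apply cont_sinpow.
  - rewrite cos_PI2, cos_0. ring.
Qed.

Lemma W_odd n : W (2*n+1) = / ((2 * INR n + 1) * cc n).
Proof.
  induction n.
  - simpl. rewrite W1. field.
  - replace (2 * S n + 1)%nat with (S (S (2*n+1))) by lia.
    assert (H := W_rec (2*n+1)).
    pose proof (cc_pos n). pose proof (pos_INR n).
    rewrite IHn in H. rewrite cc_S. rewrite S_INR.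
    replace (INR (S (S (2*n+1)))) with (2 * INR n + 3) in H by (rewrite !S_INR, plus_INR, mult_INR; simpl; ring).
    replace (INR (S (2*n+1))) with (2 * INR n + 2) in H by (rewrite !S_INR, plus_INR, mult_INR; simpl; ring).
    apply (Rmult_eq_reg_l (2 * INR n + 3)). rewrite H. field. split; lra. lra.
Qed.

Lemma pow_le1 x n : 0 <= x <= 1 -> x ^ n <= 1.
Proof. intros H. induction n; simpl. lra. assert (0 <= x ^ n) by (apply pow_le; lra). nra. Qed.

Lemma J x : 0 <= x <= PI/2 -> (PI/2 - x) * sin x <= cos x.
Proof.
  intros Hx. set (p := PI/2 - x).
  assert (Hp : 0 <= p <= PI/2) by (unfold p; lra).
  assert (H : sin 0 - 0 * cos 0 <= sin p - p * cos p).
  { apply (mono (fun y => sin y - y * cos y) (fun y => y * sin y)). lra.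
    - intros y _. eapply deriv_eq. apply (is_derive_minus sin (fun y => y * cos y)).
      apply is_derive_sin. apply (is_derive_mult (fun y => y) cos). apply is_derive_id. apply is_derive_cos.
      intros; apply Rmult_comm. unfold minus, plus, opp, mult, one; simpl. ring.
    - intros. apply cont_deriv. auto_derive. auto.
    - intros y Hy. apply Rmult_le_pos. lra. apply sin_bounds; lra. }
  rewrite sin_0 in H.
  replace x with (PI/2 - p) by (unfold p; ring). rewrite sin_shift, cos_shift. lra.
Qed.

Lemma Pc_at0 m : Pc (S m) 0 = 1.
Proof. induction m. unfold Pc; simpl; ring. rewrite Pc_S, IHm, sin_0. rewrite pow_i by lia. ring. Qed.

Lemma rr_at0 m : rr (S m) 0 = 0.
Proof. unfold rr. rewrite Pc_at0, cos_0. ring. Qed.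

Lemma D_rr m (x : R) : is_derive (rr (S m)) x ((2 * INR m + 2) * cc (S m) * sin x ^ (2*m+1)).
Proof. unfold rr. eapply deriv_eq. apply (is_derive_minus (fun _ => 1) (fun x => cos x * Pc (S m) x)).
  apply is_derive_const. apply D_cosPc. unfold minus, plus, opp, zero; simpl. ring. Qed.

Lemma ex_derive_rr N (x : R) : ex_derive (rr N) x.
Proof. destruct N. unfold rr. eapply ex_derive_ext with (f := fun _ => 1). intros; unfold Pc; simpl; ring.
  apply ex_derive_const. eexists. apply D_rr. Qed.

Lemma cont_rr N (x : R) : continuous (rr N) x.
Proof. apply cont_deriv. apply ex_derive_rr. Qed.

Lemma rr_nonneg N x : 0 <= x <= PI/2 -> 0 <= rr N x.
Proof. intros Hx. destruct N as [|m]. unfold rr, Pc; simpl; lra.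
  assert (H : rr (S m) 0 <= rr (S m) x). 2: rewrite rr_at0 in H; exact H.
  apply (mono (rr (S m)) (fun x => (2 * INR m + 2) * cc (S m) * sin x ^ (2*m+1))). lra.
  - intros; apply D_rr.
  - intros. apply cont_deriv. auto_derive. auto.
  - intros y Hy. pose proof (pos_INR m). pose proof (cc_pos (S m)). apply Rmult_le_pos.
    apply Rmult_le_pos; lra. apply pow_le. apply sin_bounds; lra.
Qed.

Lemma cosPc_sum N x : cos x * Pc N x = sumR (fun n => cc n * (cos x * sin x ^ (2*n))) N.
Proof. induction N. unfold Pc; simpl; ring. rewrite Pc_S. cbn [sumR]. rewrite <- IHN. ring. Qed.

Definition ee N := PI/2 - sumR (fun n => cc n / (2 * INR n + 1)) N.

Lemma int_rr N : is_RInt (rr N) 0 (PI/2) (ee N).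
Proof.
  unfold rr, ee. apply is_RInt_minus'.
  - eapply is_RInt_val. apply (is_RInt_const (V:=R_NormedModule)). unfold scal; simpl; unfold mult; simpl; ring.
  - eapply is_RInt_ext'. pose proof PI2_pos; lra. intros; symmetry; apply cosPc_sum.
    apply is_RInt_sumR. intros n _. eapply is_RInt_val. apply is_RInt_scal'. apply I1.
    rewrite S_INR, mult_INR. simpl. field. pose proof (pos_INR n); lra.
Qed.

Definition M k := RInt (fun x => (PI/2 - x) * sin x ^ k) 0 (PI/2).
Lemma Mis k : is_RInt (fun x => (PI/2 - x) * sin x ^ k) 0 (PI/2) (M k).
Proof. apply (RInt_correct (V:=R_CompleteNormedModule)). apply (ex_RInt_continuous (V:=R_CompleteNormedModule)).
  intros; apply cont_deriv. auto_derive. auto. Qed.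

Lemma M_nonneg k : 0 <= M k.
Proof. eapply is_RInt_nonneg. 2: apply Mis. pose proof PI2_pos; lra.
  intros x Hx. apply Rmult_le_pos. lra. apply pow_le. apply sin_bounds; lra. Qed.

Lemma M_bound j : M (S j) <= / INR (S j).
Proof. eapply is_RInt_le; [ | apply Mis | apply I1 | ]. pose proof PI2_pos; lra.
  intros x Hx. simpl. pose proof (J x). assert (0 <= sin x ^ j) by (apply pow_le, sin_bounds; lra).
  replace ((PI / 2 - x) * (sin x * sin x ^ j)) with (((PI/2 - x) * sin x) * sin x ^ j) by ring.
  apply Rmult_le_compat_r. auto. apply H; lra. Qed.

Lemma ee_parts m : ee (S m) = (2 * INR m + 2) * cc (S m) * M (2*m+1).
Proof.
  set (K := (2 * INR m + 2) * cc (S m)).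
  assert (H1 := is_RInt_minus' _ _ _ _ _ _ (int_rr (S m)) (is_RInt_scal' _ _ _ K _ (Mis (2*m+1)))).
  assert (H2 : is_RInt (fun x => rr (S m) x - K * ((PI/2 - x) * sin x ^ (2*m+1))) 0 (PI/2) 0).
  { eapply is_RInt_val. apply (FTC (fun x => (x - PI/2) * rr (S m) x)). pose proof PI2_pos; lra.
    - intros x _. eapply deriv_eq. apply (is_derive_mult (fun x => x - PI/2) (rr (S m))).
      apply (is_derive_minus (fun x => x) (fun _ => PI/2)). apply is_derive_id. apply is_derive_const.
      apply D_rr. intros; apply Rmult_comm. unfold K, minus, plus, opp, mult, one, zero; simpl. ring.
    - intros. apply (continuous_minus (V:=R_NormedModule) (rr (S m))). apply cont_rr.
      apply cont_deriv. auto_derive. auto.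
    - rewrite rr_at0. ring. }
  assert (E := is_RInt_uniq _ _ _ _ _ H1 H2).
  replace (ee (S m)) with (ee (S m) - K * M (2*m+1) + K * M (2*m+1)) by ring. rewrite E. unfold K. ring.
Qed.

Lemma ee_bound m : 0 <= ee (S m) <= 2 * cc (S m).
Proof. split.
  - eapply is_RInt_nonneg. 2: apply int_rr. pose proof PI2_pos; lra. intros; apply rr_nonneg; lra.
  - rewrite ee_parts. pose proof (M_bound (2*m)). replace (S (2*m)) with (2*m+1)%nat in H by lia.
    pose proof (cc_pos (S m)). pose proof (pos_INR m).
    rewrite plus_INR, mult_INR in H. simpl INR in H.
    assert (M (2*m+1) <= 1 / (2 * INR m + 1)) by (unfold Rdiv; rewrite Rmult_1_l; exact H).
    apply Rle_trans with ((2 * INR m + 2) * cc (S m) * (1 / (2 * INR m + 1))).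
    apply Rmult_le_compat_l. apply Rmult_le_pos; lra. auto.
    unfold Rdiv. rewrite Rmult_1_l. apply Rle_trans with (((2 * INR m + 2) / (2 * INR m + 1)) * cc (S m)).
    right. field. lra. apply Rmult_le_compat_r. lra.
    apply Rmult_le_reg_r with (2 * INR m + 1). lra. unfold Rdiv. rewrite Rmult_assoc, Rinv_l by lra. lra.
Qed.

Lemma lim_inv_lin a b : 0 < a -> 0 < b -> is_lim_seq (fun n => / (a * INR n + b)) 0.
Proof. intros Ha Hb.
  assert (H : is_lim_seq (fun n => a * INR n + b) p_infty).
  { eapply is_lim_seq_plus. apply is_lim_seq_scal_l. apply is_lim_seq_INR. apply is_lim_seq_const.
    simpl. destruct (Rle_dec 0 a) as [r|r]; [destruct (Rle_lt_or_eq_dec 0 a r)|]; simpl; try constructor; lra. }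
  apply is_lim_seq_inv in H. simpl in H. exact H. discriminate. Qed.

Lemma lim_sqrt (u : nat -> R) : is_lim_seq u 0 -> is_lim_seq (fun n => sqrt (u n)) 0.
Proof. intros H. rewrite <- sqrt_0. apply is_lim_seq_continuous. apply continuity_pt_sqrt. lra. exact H. Qed.

Lemma squeeze0 (u v : nat -> R) : (forall n, 0 <= u n <= v n) -> is_lim_seq v 0 -> is_lim_seq u 0.
Proof. intros H Hv. apply is_lim_seq_le_le with (fun _ => 0) v. auto. apply is_lim_seq_const. auto. Qed.

Lemma cc_sq n : cc n ^ 2 <= / (2 * INR n + 1).
Proof. induction n. simpl. lra.
  rewrite cc_S, S_INR. pose proof (pos_INR n). pose proof (cc_pos n).
  replace ((cc n * (2 * INR n + 1) / (2 * INR n + 2)) ^ 2) with (cc n ^ 2 * ((2 * INR n + 1)^2 / (2 * INR n + 2)^2)) by (field; lra).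
  apply Rle_trans with (/ (2 * INR n + 1) * ((2 * INR n + 1)^2 / (2 * INR n + 2)^2)).
  apply Rmult_le_compat_r. apply Rlt_le. apply Rdiv_lt_0_compat; nra. auto.
  replace (/ (2 * INR n + 1) * ((2 * INR n + 1) ^ 2 / (2 * INR n + 2) ^ 2)) with ((2 * INR n + 1) / (2 * INR n + 2) ^ 2) by (field; lra).
  apply Rle_trans with (/ (2 * (INR n + 1) + 1)). 2: lra.
  rewrite <- Rdiv_1_l. apply Rmult_le_reg_r with ((2 * INR n + 2)^2 * (2 * (INR n + 1) + 1)). nra.
  field_simplify; try lra.
Qed.

Lemma cc_lim : is_lim_seq cc 0.
Proof.
  apply squeeze0 with (fun n => sqrt (/ (2 * INR n + 1))).
  - intros n. pose proof (cc_pos n). split. lra. rewrite <- (sqrt_pow2 (cc n)) by lra.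
    apply sqrt_le_1_alt. apply cc_sq.
  - apply lim_sqrt. apply lim_inv_lin; lra.
Qed.

Lemma ee_lim : is_lim_seq ee 0.
Proof.
  apply squeeze0 with (fun n => 2 * cc n).
  - intros [|m]. unfold ee; simpl. pose proof PI_4; pose proof PI2_pos; lra. apply ee_bound.
  - replace (Finite 0) with (Rbar_mult 2 0) by (simpl; f_equal; ring). apply is_lim_seq_scal_l. apply cc_lim.
Qed.

Lemma int_sin_rr j N : is_RInt (fun x => sin x ^ (2*j+1) * rr N x) 0 (PI/2)
   (W (2*j+1) - sumR (fun n => cc n / (2 * INR n + 2 * INR j + 2)) N).
Proof.
  eapply is_RInt_ext'. pose proof PI2_pos; lra.
  2: { apply is_RInt_minus'. apply Wis. apply is_RInt_sumR.
       intros n _. eapply is_RInt_val. apply is_RInt_scal' with (k := cc n). apply (I1 (2*n+2*j+1)).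
       rewrite S_INR, !plus_INR, !mult_INR. simpl. field. pose proof (pos_INR n); pose proof (pos_INR j); lra. }
  intros x _. unfold rr. rewrite cosPc_sum.
  replace (sumR (fun n => cc n * (cos x * sin x ^ (2 * n + 2 * j + 1))) N) with
    (sin x ^ (2*j+1) * sumR (fun n => cc n * (cos x * sin x ^ (2 * n)))  N).
  ring. rewrite <- sumR_scal. apply sumR_ext. intros n _.
  cbv beta. replace (2*n+2*j+1)%nat with (2*n + (2*j+1))%nat by lia. rewrite (pow_add (sin x) (2*n) (2*j+1)). ring.
Qed.

Lemma kern_bound j N : 0 <= W (2*j+1) - sumR (fun n => cc n / (2 * INR n + 2 * INR j + 2)) N <= ee N.
Proof. split.
  - eapply is_RInt_nonneg. 2: apply int_sin_rr. pose proof PI2_pos; lra.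
    intros x Hx. apply Rmult_le_pos. apply pow_le, sin_bounds; lra. apply rr_nonneg; lra.
  - eapply is_RInt_le; [ | apply int_sin_rr | apply int_rr | ]. pose proof PI2_pos; lra.
    intros x Hx. pose proof (rr_nonneg N x). pose proof (sin_bounds x).
    cbv beta. replace (rr N x) with (1 * rr N x) at 2 by ring. apply Rmult_le_compat_r. apply H; lra.
    apply pow_le1. apply sin_bounds; lra.
Qed.

Lemma kern_series j : is_series (fun n => cc n / (INR n + INR j + 1)) (/ ((INR j + 1) * cc (S j))).
Proof.
  apply is_series_sumR.
  set (X := fun N => W (2*j+1) - sumR (fun n => cc n / (2 * INR n + 2 * INR j + 2)) N).
  assert (HX : is_lim_seq X 0).
  { apply squeeze0 with ee. apply kern_bound. apply ee_lim. }
  apply is_lim_seq_ext with (fun N => 2 * W (2*j+1) + (-2) * X N).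
  { intros N. unfold X.
    replace (sumR (fun n => cc n / (INR n + INR j + 1)) N) with (2 * sumR (fun n => cc n / (2 * INR n + 2 * INR j + 2)) N). ring.
    rewrite <- sumR_scal. apply sumR_ext. intros n _. field. pose proof (pos_INR n); pose proof (pos_INR j); lra. }
  replace (/ ((INR j + 1) * cc (S j))) with (2 * W (2*j+1) + (-2) * 0).
  apply is_lim_seq_plus'. apply is_lim_seq_const. apply is_lim_seq_scal_l with (a := -2) (lu := 0) in HX.
  simpl in HX. exact HX.
  rewrite W_odd, cc_S. pose proof (pos_INR j); pose proof (cc_pos j). field. lra.
Qed.

Definition Qs N x := sumR (fun n => sin x ^ (2*n+1) * cos x / ((2 * INR n + 1) * cc n)) N.
Lemma Qs_S N x : Qs (S N) x = Qs N x + sin x ^ (2*N+1) * cos x / ((2 * INR N + 1) * cc N).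
Proof. reflexivity. Qed.

Lemma D_Qs N (x : R) : is_derive (Qs N) x (1 - sin x ^ (2*N) / cc N).
Proof.
  induction N.
  - eapply deriv_ext with (f := fun _ => 0). intros; unfold Qs; simpl; ring.
    eapply deriv_eq. apply is_derive_const. simpl. unfold zero; simpl. field.
  - eapply deriv_ext with (f := fun x => Qs N x + / ((2 * INR N + 1) * cc N) * (sin x ^ S (2*N) * cos x)).
    { intros t. rewrite Qs_S. replace (2*N+1)%nat with (S (2*N)) by lia. field.
      pose proof (cc_pos N); pose proof (pos_INR N). split; lra. }
    eapply deriv_eq.
    + apply (is_derive_plus (Qs N)). exact IHN. apply is_derive_scal.
      apply (is_derive_mult (fun x => sin x ^ S (2*N)) cos). apply D_sinpow. apply is_derive_cos.
      intros; apply Rmult_comm.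
    + pose proof (cc_pos N); pose proof (pos_INR N).
      replace (2 * S N)%nat with (S (S (2*N))) by lia. rewrite !pow_SS. rewrite cc_S.
      rewrite S_INR, mult_INR. simpl INR. unfold plus, mult; simpl.
      trig_close (/ ((2 * INR N + 1) * cc N) * ((2 * INR N + 1) * sin x ^ (N + (N + 0)))) x.
      field. lra.
Qed.

Definition aa N x := x - Qs N x.
Lemma D_aa N (x : R) : is_derive (aa N) x (sin x ^ (2*N) / cc N).
Proof. unfold aa. eapply deriv_eq. apply (is_derive_minus (fun x => x) (Qs N)). apply is_derive_id. apply D_Qs.
  unfold minus, plus, opp, one; simpl. ring. Qed.
Lemma aa_at0 N : aa N 0 = 0.
Proof. unfold aa. induction N. unfold Qs; simpl; ring. rewrite Qs_S. rewrite sin_0, pow_i by lia.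
  unfold Rdiv. rewrite !Rmult_0_l, Rplus_0_r. exact IHN. Qed.
Lemma cont_aa N (x : R) : continuous (aa N) x.
Proof. apply cont_deriv. eexists. apply D_aa. Qed.
Lemma aa_nonneg N x : 0 <= x <= PI/2 -> 0 <= aa N x.
Proof. intros Hx. assert (H : aa N 0 <= aa N x). 2: rewrite aa_at0 in H; exact H.
  apply (mono (aa N) (fun x => sin x ^ (2*N) / cc N)). lra. intros; apply D_aa.
  intros. apply cont_deriv. auto_derive. pose proof (cc_pos N). lra.
  intros y Hy. apply Rdiv_le_0_compat. apply pow_le, sin_bounds; lra. apply cc_pos. Qed.

Lemma int_id : is_RInt (fun x => x) 0 (PI/2) (PI^2/8).
Proof. eapply is_RInt_val. apply (FTC (fun x => x^2/2)). pose proof PI2_pos; lra.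
  intros x _. auto_derive. auto. field. intros. apply cont_deriv. auto_derive. auto. field. Qed.

Lemma int_aa N : is_RInt (aa N) 0 (PI/2) (PI^2/8 - sumR (fun n => / ((2 * INR n + 1) * (2 * INR n + 2) * cc n)) N).
Proof.
  unfold aa. apply is_RInt_minus'. apply int_id.
  unfold Qs. apply is_RInt_sumR. intros n _.
  pose proof (cc_pos n); pose proof (pos_INR n).
  eapply is_RInt_val. eapply is_RInt_ext'. pose proof PI2_pos; lra. 2: { apply is_RInt_scal' with (k := / ((2 * INR n + 1) * cc n)). apply (I1 (2*n+1)). }
  intros x _. cbv beta. field. split; lra.
  rewrite S_INR, plus_INR, mult_INR. simpl INR. field. split; lra.
Qed.

Lemma int_aa_parts N : is_RInt (aa N) 0 (PI/2) (M (2*N) / cc N).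
Proof.
  assert (H2 : is_RInt (fun x => aa N x - / cc N * ((PI/2 - x) * sin x ^ (2*N))) 0 (PI/2) 0).
  { eapply is_RInt_val. apply (FTC (fun x => (x - PI/2) * aa N x)). pose proof PI2_pos; lra.
    - intros x _. eapply deriv_eq. apply (is_derive_mult (fun x => x - PI/2) (aa N)).
      apply (is_derive_minus (fun x => x) (fun _ => PI/2)). apply is_derive_id. apply is_derive_const.
      apply D_aa. intros; apply Rmult_comm. unfold minus, plus, opp, mult, one, zero; simpl. field. pose proof (cc_pos N); lra.
    - intros. apply (continuous_minus (V:=R_NormedModule) (aa N)). apply cont_aa.
      apply cont_deriv. auto_derive. auto.
    - rewrite aa_at0. ring. }
  assert (H3 : is_RInt (aa N) 0 (PI/2) (RInt (aa N) 0 (PI/2))).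
  { apply (RInt_correct (V:=R_CompleteNormedModule)). apply (ex_RInt_continuous (V:=R_CompleteNormedModule)). intros; apply cont_aa. }
  assert (H1 := is_RInt_minus' _ _ _ _ _ _ H3 (is_RInt_scal' _ _ _ (/ cc N) _ (Mis (2*N)))).
  assert (E := is_RInt_uniq _ _ _ _ _ H1 H2).
  eapply is_RInt_val. exact H3. rewrite (eq_from_sub _ _ E). unfold Rdiv. ring.
Qed.


Lemma cc_low m : / (4 * (INR m + 1)) <= cc (S m) ^ 2.
Proof. induction m. simpl. lra.
  rewrite cc_S, S_INR. pose proof (pos_INR m). pose proof (cc_pos (S m)).
  replace ((cc (S m) * (2 * (INR m + 1) + 1) / (2 * (INR m + 1) + 2)) ^ 2) with (cc (S m) ^ 2 * ((2 * INR m + 3)^2 / (2 * INR m + 4)^2)) by (field; lra).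
  apply Rle_trans with (/ (4 * (INR m + 1)) * ((2 * INR m + 3)^2 / (2 * INR m + 4)^2)).
  2: { apply Rmult_le_compat_r. apply Rlt_le. apply Rdiv_lt_0_compat; nra. auto. }
  replace (/ (4 * (INR m + 1)) * ((2 * INR m + 3) ^ 2 / (2 * INR m + 4) ^ 2)) with ((2 * INR m + 3) ^ 2 / (4 * (INR m + 1) * (2 * INR m + 4) ^ 2)) by (field; lra).
  apply Rmult_le_reg_r with (4 * (INR m + 1 + 1) * (4 * (INR m + 1) * (2 * INR m + 4) ^ 2)). nra.
  field_simplify; try nra.
Qed.

Lemma inv_ncc_lim : is_lim_seq (fun m => / ((2 * INR m + 2) * cc (S m))) 0.
Proof.
  apply squeeze0 with (fun m => sqrt (/ (1 * INR m + 1))).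
  - intros m. pose proof (cc_pos (S m)). pose proof (pos_INR m). pose proof (cc_low m).
    assert (Hp : 0 < (2 * INR m + 2) * cc (S m)) by (apply Rmult_lt_0_compat; lra).
    split. apply Rlt_le, Rinv_0_lt_compat; auto.
    rewrite <- (sqrt_pow2 (/ ((2 * INR m + 2) * cc (S m)))) by (apply Rlt_le, Rinv_0_lt_compat; auto).
    apply sqrt_le_1_alt.
    replace ((/ ((2 * INR m + 2) * cc (S m))) ^ 2) with (/ ((2 * INR m + 2)^2 * cc (S m) ^ 2)) by (field; lra).
    apply Rinv_le_contravar. lra.
    apply Rle_trans with ((2 * INR m + 2)^2 * / (4 * (INR m + 1))).
    right. field. lra. apply Rmult_le_compat_l. nra. auto.
  - apply lim_sqrt. apply lim_inv_lin; lra.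
Qed.

Definition gA n := / ((2 * INR n + 1) * (2 * INR n + 2) * cc n).

Lemma aa_bound m : 0 <= PI^2/8 - sumR gA (S m) <= / ((2 * INR m + 2) * cc (S m)).
Proof.
  assert (E := is_RInt_uniq _ _ _ _ _ (int_aa (S m)) (int_aa_parts (S m))).
  unfold gA. rewrite E. pose proof (cc_pos (S m)). pose proof (M_nonneg (2 * S m)). pose proof (M_bound (2*m+1)).
  replace (S (2*m+1)) with (2 * S m)%nat in H1 by lia. pose proof (pos_INR m).
  split. apply Rdiv_le_0_compat; auto.
  replace (INR (2 * S m)) with (2 * INR m + 2) in H1 by (rewrite mult_INR, (S_INR m); simpl; ring).
  unfold Rdiv. rewrite Rinv_mult. apply Rmult_le_compat_r. apply Rlt_le, Rinv_0_lt_compat; auto. auto.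
Qed.

Lemma series_A : is_series gA (PI^2/8).
Proof.
  apply is_series_sumR. apply is_lim_seq_incr_1.
  apply is_lim_seq_ext with (fun m => PI^2/8 - (PI^2/8 - sumR gA (S m))). intros; ring.
  replace (Finite (PI^2/8)) with (Finite (PI^2/8 - 0)) by (f_equal; ring).
  apply is_lim_seq_minus'. apply is_lim_seq_const.
  apply squeeze0 with (fun m => / ((2 * INR m + 2) * cc (S m))). apply aa_bound. apply inv_ncc_lim.
Qed.

Lemma series_invcc : is_series (fun n => / ((INR n + 1)^2 * cc (S n))) (PI^2/2).
Proof.
  eapply is_series_val. eapply is_series_ext'. 2: apply (is_series_scal' 4), series_A.
  2: field.
  intros n. unfold gA. rewrite cc_S. pose proof (cc_pos n); pose proof (pos_INR n).
  field. split; lra.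
Qed.

Definition Bs N x := sumR (fun n => cc n * sin x ^ (2*n+1) / (2 * INR n + 1)) N.
Lemma Bs_S N x : Bs (S N) x = Bs N x + cc N * sin x ^ (2*N+1) / (2 * INR N + 1).
Proof. reflexivity. Qed.
Lemma D_Bs N (x : R) : is_derive (Bs N) x (cos x * Pc N x).
Proof.
  induction N.
  - eapply deriv_ext with (f := fun _ => 0). intros; unfold Bs; simpl; ring.
    eapply deriv_eq. apply is_derive_const. unfold Pc; simpl. unfold zero; simpl. ring.
  - eapply deriv_ext with (f := fun x => Bs N x + cc N / (2 * INR N + 1) * sin x ^ S (2*N)).
    { intros t. unfold Bs. cbn [sumR]. replace (2*N+1)%nat with (S (2*N)) by lia. field.
      pose proof (pos_INR N). lra. }
    eapply deriv_eq.
    + apply (is_derive_plus (Bs N)). exact IHN. apply is_derive_scal. apply D_sinpow.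
    + rewrite Pc_S. rewrite S_INR, mult_INR. simpl INR. unfold plus; simpl. field. pose proof (pos_INR N). lra.
Qed.

Definition bb N x := x - Bs N x.
Lemma D_bb N (x : R) : is_derive (bb N) x (rr N x).
Proof. unfold bb, rr. eapply deriv_eq. apply (is_derive_minus (fun x => x) (Bs N)). apply is_derive_id. apply D_Bs.
  unfold minus, plus, opp, one; simpl. ring. Qed.
Lemma bb_at0 N : bb N 0 = 0.
Proof. unfold bb. induction N. unfold Bs; simpl; ring. rewrite Bs_S. rewrite sin_0, pow_i by lia.
  unfold Rdiv. rewrite Rmult_0_r, !Rmult_0_l, Rplus_0_r. exact IHN. Qed.
Lemma cont_bb N (x : R) : continuous (bb N) x.
Proof. apply cont_deriv. eexists. apply D_bb. Qed.

Lemma int_bb N : is_RInt (bb N) 0 (PI/2) (PI^2/8 - sumR (fun n => / (2 * INR n + 1)^2) N).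
Proof.
  unfold bb. apply is_RInt_minus'. apply int_id.
  unfold Bs. apply is_RInt_sumR. intros n _.
  pose proof (cc_pos n); pose proof (pos_INR n).
  eapply is_RInt_val. eapply is_RInt_ext'. pose proof PI2_pos; lra. 2: { apply is_RInt_scal' with (k := cc n / (2 * INR n + 1)). apply (Wis (2*n+1)). }
  intros x _. cbv beta. field. lra.
  rewrite W_odd. field. split; lra.
Qed.

Definition Yb N := RInt (fun x => (PI/2 - x) * rr N x) 0 (PI/2).
Lemma Ybis N : is_RInt (fun x => (PI/2 - x) * rr N x) 0 (PI/2) (Yb N).
Proof. apply (RInt_correct (V:=R_CompleteNormedModule)). apply (ex_RInt_continuous (V:=R_CompleteNormedModule)).
  intros. apply (continuous_mult (K:=R_AbsRing) (fun x => PI/2 - x) (rr N)). apply cont_deriv. auto_derive. auto. apply cont_rr. Qed.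

Lemma int_bb_parts N : is_RInt (bb N) 0 (PI/2) (Yb N).
Proof.
  assert (H2 : is_RInt (fun x => bb N x - (PI/2 - x) * rr N x) 0 (PI/2) 0).
  { eapply is_RInt_val. apply (FTC (fun x => (x - PI/2) * bb N x)). pose proof PI2_pos; lra.
    - intros x _. eapply deriv_eq. apply (is_derive_mult (fun x => x - PI/2) (bb N)).
      apply (is_derive_minus (fun x => x) (fun _ => PI/2)). apply is_derive_id. apply is_derive_const.
      apply D_bb. intros; apply Rmult_comm. unfold minus, plus, opp, mult, one, zero; simpl. ring.
    - intros. apply (continuous_minus (V:=R_NormedModule) (bb N)). apply cont_bb.
      apply (continuous_mult (K:=R_AbsRing) (fun x => PI/2 - x) (rr N)). apply cont_deriv. auto_derive. auto. apply cont_rr.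
    - rewrite bb_at0. ring. }
  assert (H3 : is_RInt (bb N) 0 (PI/2) (RInt (bb N) 0 (PI/2))).
  { apply (RInt_correct (V:=R_CompleteNormedModule)). apply (ex_RInt_continuous (V:=R_CompleteNormedModule)). intros; apply cont_bb. }
  assert (H1 := is_RInt_minus' _ _ _ _ _ _ H3 (Ybis N)).
  assert (E := is_RInt_uniq _ _ _ _ _ H1 H2).
  eapply is_RInt_val. exact H3. apply (eq_from_sub _ _ E).
Qed.

Lemma Yb_bound N : 0 <= Yb N <= PI/2 * ee N.
Proof. split.
  - eapply is_RInt_nonneg. 2: apply Ybis. pose proof PI2_pos; lra.
    intros x Hx. apply Rmult_le_pos. lra. apply rr_nonneg; lra.
  - eapply is_RInt_le; [ | apply Ybis | apply is_RInt_scal', int_rr | ]. pose proof PI2_pos; lra.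
    intros x Hx. apply Rmult_le_compat_r. apply rr_nonneg; lra. lra.
Qed.

Definition gO n := / (2 * INR n + 1)^2.
Lemma series_odd : is_series gO (PI^2/8).
Proof.
  apply is_series_sumR.
  apply is_lim_seq_ext with (fun m => PI^2/8 - Yb m).
  { intros m. rewrite (is_RInt_uniq _ _ _ _ _ (int_bb_parts m) (int_bb m)). unfold gO. ring. }
  replace (Finite (PI^2/8)) with (Finite (PI^2/8 - 0)) by (f_equal; ring).
  apply is_lim_seq_minus'. apply is_lim_seq_const.
  apply squeeze0 with (fun m => PI/2 * ee m). apply Yb_bound.
  replace (Finite 0) with (Rbar_mult (PI/2) 0) by (simpl; f_equal; ring). apply is_lim_seq_scal_l. apply ee_lim.
Qed.

Definition gZ k := / (INR k + 1)^2.

Lemma Z_split N : sumR gZ (2*N) = sumR gO N + sumR gZ N / 4.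
Proof. induction N. simpl. field.
  replace (2 * S N)%nat with (S (S (2*N))) by lia. cbn [sumR]. rewrite IHN. unfold gZ, gO.
  rewrite !S_INR, mult_INR. simpl INR. pose proof (pos_INR N). field. lra. Qed.

Lemma gZ_pos k : 0 <= gZ k.
Proof. unfold gZ. pose proof (pos_INR k). apply Rlt_le, Rinv_0_lt_compat. nra. Qed.
Lemma gO_pos k : 0 <= gO k.
Proof. unfold gO. pose proof (pos_INR k). apply Rlt_le, Rinv_0_lt_compat. nra. Qed.

Lemma series_zeta : is_series gZ (PI^2/6).
Proof.
  apply is_series_sumR.
  assert (HO : is_lim_seq (sumR gO) (PI^2/8)).
  { apply is_lim_seq_incr_1. apply is_lim_seq_ext with (sum_n gO). intros; apply sum_n_sumR. exact series_odd. }
  assert (Oinc : forall n, sumR gO n <= PI^2/8).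
  { intros n. apply (is_lim_seq_incr_compare (sumR gO)). exact HO. intros; simpl; pose proof (gO_pos n0); lra. }
  assert (Zb : forall n, sumR gZ n <= PI^2/6).
  { intros n. apply Rle_trans with (sumR gZ (2*n)). apply sumR_mono. apply gZ_pos. lia.
    assert (H := Z_split n). assert (sumR gZ n <= sumR gZ (2*n)) by (apply sumR_mono; [apply gZ_pos| lia]).
    specialize (Oinc n). lra. }
  destruct (ex_finite_lim_seq_incr (sumR gZ) (PI^2/6)) as [L HL].
  { intros n; simpl; pose proof (gZ_pos n); lra. } exact Zb.
  assert (H2 : is_lim_seq (fun n => sumR gZ (2*n)) L).
  { apply (is_lim_seq_subseq (sumR gZ) L (fun n => 2*n)%nat). apply eventually_subseq. intros; lia. exact HL. }
  assert (H3 : is_lim_seq (fun n => sumR gO n + sumR gZ n / 4) (PI^2/8 + L/4)).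
  { apply is_lim_seq_plus'. exact HO. apply is_lim_seq_ext with (fun n => / 4 * sumR gZ n). intros; unfold Rdiv; ring.
    replace (L/4) with (/4 * L) by (unfold Rdiv; ring). apply (is_lim_seq_scal_l _ (/4) L). exact HL. }
  apply is_lim_seq_ext with (v := fun n => sumR gZ (2*n)) in H3.
  2: { intros; symmetry; apply Z_split. }
  apply is_lim_seq_unique in H2. apply is_lim_seq_unique in H3. rewrite H2 in H3. injection H3 as H3.
  replace (PI^2/6) with L by lra. exact HL.
Qed.

Definition Us N x := sumR (fun n => cc (S n) * sin x ^ (2*n+1)) N.
Lemma sin_Us N x : sin x * Us N x = Pc (S N) x - 1.
Proof. induction N. unfold Us, Pc; simpl; ring.
  assert (E : Us (S N) x = Us N x + cc (S N) * sin x ^ (2*N+1)) by reflexivity.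
  rewrite E, Pc_S. rewrite Rmult_plus_distr_l, IHN. replace (2 * S N)%nat with (S (2*N+1)) by lia. rewrite pow_SS. ring. Qed.

Definition qq N x := sin x / (1 + cos x) - cos x * Us N x.

Lemma sin_qq N x : 0 <= x <= PI/2 -> sin x * qq N x = rr (S N) x.
Proof. intros Hx. pose proof (cos_nonneg x Hx). unfold qq, rr.
  replace (sin x * (sin x / (1 + cos x) - cos x * Us N x)) with ((sin x * sin x) / (1 + cos x) - cos x * (sin x * Us N x)) by (field; lra).
  rewrite sin_Us. replace (sin x * sin x) with (1 - cos x * cos x) by (rewrite cos2; ring). field. lra. Qed.

Lemma rr_le_aa N x : 0 <= x <= PI/2 -> rr (S N) x <= (2 * INR N + 2) * cc (S N) * cc N * sin x * aa N x.
Proof.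
  intros Hx. set (K := (2 * INR N + 2) * cc (S N) * cc N).
  assert (H : K * sin 0 * aa N 0 - rr (S N) 0 <= K * sin x * aa N x - rr (S N) x).
  2: { rewrite aa_at0, rr_at0 in H. lra. }
  apply (mono (fun x => K * sin x * aa N x - rr (S N) x) (fun x => K * cos x * aa N x)). lra.
  - intros y _. eapply deriv_eq. apply (is_derive_minus (fun x => K * sin x * aa N x) (rr (S N))).
    apply (is_derive_mult (fun x => K * sin x) (aa N)). apply is_derive_scal. apply is_derive_sin. apply D_aa.
    intros; apply Rmult_comm. apply D_rr.
    unfold K. replace (2*N+1)%nat with (S (2*N)) by lia. rewrite pow_SS. rewrite !cc_S.
    unfold minus, plus, opp, mult; simpl.
    field. pose proof (cc_pos N); pose proof (pos_INR N); split; lra.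
  - intros. apply (continuous_mult (K:=R_AbsRing) (fun x => K * cos x) (aa N)). apply cont_deriv. auto_derive. auto. apply cont_aa.
  - intros y Hy. apply Rmult_le_pos. apply Rmult_le_pos. unfold K. pose proof (cc_pos N); pose proof (cc_pos (S N)); pose proof (pos_INR N).
    apply Rmult_le_pos. apply Rmult_le_pos; lra. lra. apply cos_nonneg; lra. apply aa_nonneg; lra.
Qed.

Lemma int_sin_over : is_RInt (fun x => sin x / (1 + cos x)) 0 (PI/2) (ln 2).
Proof.
  eapply is_RInt_val. apply (FTC (fun x => - ln (1 + cos x))). pose proof PI2_pos; lra.
  - intros x Hx. pose proof (cos_nonneg x Hx). auto_derive. lra. field. lra.
  - intros x Hx. pose proof (cos_nonneg x Hx). apply cont_deriv. auto_derive. lra.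
  - rewrite cos_PI2, cos_0, Rplus_0_r, ln_1. replace (1+1) with 2 by ring. ring.
Qed.

Lemma cont_Us N (x : R) : continuous (fun x => cos x * Us N x) x.
Proof. apply cont_deriv. unfold Us. induction N.
  - eapply ex_derive_ext' with (f := fun _ => 0). intros; simpl; ring. apply ex_derive_const.
  - eapply ex_derive_ext' with (f := fun x => cos x * sumR (fun n => cc (S n) * sin x ^ (2*n+1)) N + cc (S N) * (cos x * sin x ^ (2*N+1))).
    intros; cbn [sumR]; ring. apply (ex_derive_plus (fun x => cos x * sumR (fun n => cc (S n) * sin x ^ (2*n+1)) N)). exact IHN.
    auto_derive. auto.
Qed.

Lemma int_cosUs N : is_RInt (fun x => cos x * Us N x) 0 (PI/2) (sumR (fun n => cc (S n) / (2 * INR n + 2)) N).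
Proof.
  eapply is_RInt_ext'. pose proof PI2_pos; lra.
  2: { apply is_RInt_sumR. intros n _. eapply is_RInt_val. apply is_RInt_scal' with (k := cc (S n)). apply (I1 (2*n+1)).
       rewrite S_INR, plus_INR, mult_INR. simpl INR. field. pose proof (pos_INR n); lra. }
  intros x _. cbv beta. unfold Us. rewrite <- sumR_scal. apply sumR_ext. intros; ring.
Qed.

Lemma int_qq N : is_RInt (qq N) 0 (PI/2) (ln 2 - sumR (fun n => cc (S n) / (2 * INR n + 2)) N).
Proof. unfold qq. apply is_RInt_minus'. apply int_sin_over. apply int_cosUs. Qed.

Lemma qq_bound m : 0 <= ln 2 - sumR (fun n => cc (S n) / (2 * INR n + 2)) (S m) <= 2 * cc (S (S m)).
Proof.
  set (N := S m). pose proof (cc_pos N); pose proof (cc_pos (S N)); pose proof (pos_INR N).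
  split.
  - eapply is_RInt_nonneg. 2: apply int_qq. pose proof PI2_pos; lra.
    intros x Hx. assert (0 < sin x) by (apply sin_gt_0; lra).
    apply Rmult_le_reg_l with (sin x). auto. rewrite Rmult_0_r, sin_qq by lra. apply rr_nonneg; lra.
  - set (K := (2 * INR N + 2) * cc (S N) * cc N).
    assert (HK : 0 <= K) by (unfold K; apply Rmult_le_pos; [apply Rmult_le_pos|]; lra).
    apply Rle_trans with (K * (M (2*N) / cc N)).
    + eapply is_RInt_le; [ | apply int_qq | apply is_RInt_scal', int_aa_parts | ]. pose proof PI2_pos; lra.
      intros x Hx. assert (0 < sin x) by (apply sin_gt_0; lra).
      apply Rmult_le_reg_l with (sin x). auto. rewrite sin_qq by lra.
      replace (sin x * (K * aa N x)) with (K * sin x * aa N x) by ring. apply rr_le_aa; lra.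
    + pose proof (M_bound (2*m+1)). replace (S (2*m+1)) with (2*N)%nat in H2 by (unfold N; lia).
      replace (INR (2 * N)) with (2 * INR m + 2) in H2 by (unfold N; rewrite mult_INR, (S_INR m); simpl; ring).
      unfold K. replace ((2 * INR N + 2) * cc (S N) * cc N * (M (2 * N) / cc N)) with ((2 * INR N + 2) * cc (S N) * M (2*N)) by (field; lra).
      unfold N. rewrite S_INR.
      apply Rle_trans with ((2 * (INR m + 1) + 2) * cc (S (S m)) * / (2 * INR m + 2)).
      apply Rmult_le_compat_l. unfold N in *. pose proof (pos_INR m). apply Rmult_le_pos; lra. auto.
      pose proof (pos_INR m). unfold N in *.
      apply Rmult_le_reg_r with (2 * INR m + 2). lra. field_simplify; try lra. nra.
Qed.

Lemma series_ln2 : is_series (fun n => cc (S n) / (INR n + 1)) (2 * ln 2).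
Proof.
  apply is_series_sumR. apply is_lim_seq_incr_1.
  apply is_lim_seq_ext with (fun m => 2 * ln 2 - 2 * (ln 2 - sumR (fun n => cc (S n) / (2 * INR n + 2)) (S m))).
  { intros m. replace (sumR (fun n => cc (S n) / (INR n + 1)) (S m)) with (2 * sumR (fun n => cc (S n) / (2 * INR n + 2)) (S m)). ring.
    rewrite <- sumR_scal. apply sumR_ext. intros n _. pose proof (pos_INR n). field. lra. }
  replace (Finite (2 * ln 2)) with (Finite (2 * ln 2 - 2 * 0)) by (f_equal; ring).
  apply is_lim_seq_minus'. apply is_lim_seq_const.
  apply is_lim_seq_scal_l with (a := 2) (lu := 0). 
  apply squeeze0 with (fun m => 2 * cc (S (S m))). apply qq_bound.
  replace (Finite 0) with (Rbar_mult 2 0) by (simpl; f_equal; ring). apply is_lim_seq_scal_l.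
  apply is_lim_seq_ext with (fun n => cc (n + 2)%nat). intros; f_equal; lia. apply -> (is_lim_seq_incr_n cc 2). apply cc_lim.
Qed.

Lemma series_lim (b : nat -> R) (l : R) : is_series b l -> is_lim_seq (sumR b) l.
Proof. intros H. apply is_lim_seq_incr_1. apply is_lim_seq_ext with (sum_n b). intros; apply sum_n_sumR. exact H. Qed.

Lemma series_partial_le (b : nat -> R) (l : R) N : (forall n, 0 <= b n) -> is_series b l -> sumR b N <= l.
Proof. intros Hb H. apply (is_lim_seq_incr_compare (sumR b)). apply series_lim; auto.
  intros; simpl; pose proof (Hb n); lra. Qed.

Lemma series_le (u v : nat -> R) (U V : R) : is_series u U -> is_series v V -> (forall n, u n <= v n) -> U <= V.
Proof. intros Hu Hv H. apply series_lim in Hu. apply series_lim in Hv.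
  assert (Rbar_le U V). apply (is_lim_seq_le (sumR u) (sumR v) U V); auto. intros; apply sumR_le; auto. simpl in H0. exact H0. Qed.

Lemma series_sumR_fin (a : nat -> nat -> R) (r : nat -> R) N :
  (forall n, is_series (a n) (r n)) -> is_series (fun k => sumR (fun n => a n k) N) (sumR r N).
Proof. intros H. induction N; simpl.
  - apply series_zero.
  - apply is_series_plus'. apply IHN. apply H.
Qed.

Lemma sumR_swap (a : nat -> nat -> R) N K : sumR (fun k => sumR (fun n => a n k) N) K = sumR (fun n => sumR (fun k => a n k) K) N.
Proof. induction K; simpl. induction N; simpl; [auto| rewrite <- IHN; ring].
  rewrite IHK. rewrite <- sumR_plus. reflexivity. Qed.

Lemma tonelli (a : nat -> nat -> R) (r s : nat -> R) (L : R) :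
  (forall n k, 0 <= a n k) ->
  (forall n, is_series (a n) (r n)) ->
  (forall k, is_series (fun n => a n k) (s k)) ->
  is_series s L -> is_series r L.
Proof.
  intros Ha Hr Hs HL.
  assert (rpos : forall n, 0 <= r n). { intros n. eapply series_le. apply series_zero. apply Hr. apply Ha. }
  assert (Hb : forall N, sumR r N <= L).
  { intros N. eapply series_le. apply series_sumR_fin. exact Hr. exact HL.
    intros k. apply (series_partial_le (fun n => a n k)). intros; apply Ha. apply Hs. }
  destruct (ex_finite_lim_seq_incr (sumR r) L) as [R0 HR0]. intros; simpl; pose proof (rpos n); lra. exact Hb.
  assert (HR0L : R0 <= L).
  { assert (Rbar_le R0 L). eapply is_lim_seq_le. 2: exact HR0. 2: apply is_lim_seq_const. intros; apply Hb. exact H. }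
  assert (HLR0 : L <= R0).
  { assert (HsK : forall K, sumR s K <= R0).
    { intros K. assert (E : is_lim_seq (fun N => sumR (fun k => sumR (fun n => a n k) N) K) (sumR s K)).
      { clear -Hs. induction K; simpl. apply is_lim_seq_const.
        apply is_lim_seq_plus'. exact IHK. apply series_lim. apply Hs. }
      assert (Rbar_le (sumR s K) R0). eapply is_lim_seq_le. 2: exact E. 2: exact HR0.
      intros N. cbv beta. rewrite sumR_swap. apply sumR_le. intros n. apply (series_partial_le (a n)). intros; apply Ha. apply Hr.
      exact H. }
    assert (Rbar_le L R0). eapply is_lim_seq_le. 2: apply series_lim, HL. 2: apply is_lim_seq_const. intros; apply HsK. exact H. }
  replace L with R0 by lra. apply is_series_sumR. exact HR0.
Qed.

Definition Hm n := sumR (fun k => / (INR k + 1)) n.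
Lemma Hm_S n : Hm (S n) = Hm n + / (INR n + 1).
Proof. reflexivity. Qed.
Lemma Hm_nonneg n : 0 <= Hm n.
Proof. apply sumR_nonneg. intros k. pose proof (pos_INR k). apply Rlt_le, Rinv_0_lt_compat. lra. Qed.

Lemma tail_lim p : is_lim_seq (fun K => Hm (K + p) - Hm K) 0.
Proof. induction p.
  - apply is_lim_seq_ext with (fun _ => 0). intros; rewrite Nat.add_0_r; ring. apply is_lim_seq_const.
  - apply is_lim_seq_ext with (fun K => (Hm (K + p) - Hm K) + / (1 * INR K + (INR p + 1))).
    { intros K. replace (K + S p)%nat with (S (K + p)) by lia. rewrite Hm_S, plus_INR. field_simplify. auto.
      pose proof (pos_INR K); pose proof (pos_INR p); lra. pose proof (pos_INR K); pose proof (pos_INR p); lra. }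
    replace (Finite 0) with (Finite (0 + 0)) by (f_equal; ring). apply is_lim_seq_plus'. exact IHp.
    apply lim_inv_lin. lra. pose proof (pos_INR p); lra.
Qed.

Lemma harm_partial p K : INR p * sumR (fun k => / ((INR k + 1) * (INR k + 1 + INR p))) K = Hm p - (Hm (K + p) - Hm K).
Proof. induction K.
  - simpl. unfold Hm; simpl. ring.
  - cbn [sumR]. rewrite Rmult_plus_distr_l, IHK. simpl (S K + p)%nat. rewrite !Hm_S. rewrite plus_INR.
    pose proof (pos_INR K); pose proof (pos_INR p). field. lra.
Qed.

Lemma harm_series p : (1 <= p)%nat -> is_series (fun k => / ((INR k + 1) * (INR k + 1 + INR p))) (Hm p / INR p).
Proof. intros Hp. assert (0 < INR p) by (apply lt_0_INR; lia).
  apply is_series_sumR.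
  apply is_lim_seq_ext with (fun K => / INR p * (Hm p - (Hm (K + p) - Hm K))).
  { intros K. rewrite <- harm_partial. field. lra. }
  replace (Hm p / INR p) with (/ INR p * (Hm p - 0)) by (unfold Rdiv; ring).
  apply (is_lim_seq_scal_l _ (/ INR p) (Hm p - 0)). apply is_lim_seq_minus'. apply is_lim_seq_const. apply tail_lim.
Qed.

Lemma is_series_shift (a : nat -> R) (l : R) : is_series a l -> is_series (fun n => a (S n)) (l - a O).
Proof. intros H. apply (is_series_incr_1 (K:=R_AbsRing) (V:=R_NormedModule)). change (plus (l - a O) (a O)) with (l - a O + a O).
  replace (l - a O + a O) with l by ring. exact H. Qed.

Lemma T1_series : is_series (fun n => cc (S n) * (Hm (S n) / INR (S n))) (PI^2/3).
Proof.
  apply (tonelli (fun n k => cc (S n) * / ((INR k + 1) * (INR k + 1 + INR (S n))))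
      _ (fun k => / ((INR k + 1)^2 * cc (S k)) - gZ k)).
  - intros n k. pose proof (cc_pos (S n)); pose proof (pos_INR k); pose proof (pos_INR (S n)).
    apply Rmult_le_pos. lra. apply Rlt_le, Rinv_0_lt_compat. nra.
  - intros n. apply is_series_scal'. apply harm_series. lia.
  - intros k. assert (H := is_series_shift _ _ (kern_series k)).
    eapply is_series_val. eapply is_series_ext'. 2: apply (is_series_scal' (/ (INR k + 1))), H.
    + intros n. cbv beta. rewrite S_INR. pose proof (pos_INR k); pose proof (pos_INR n). field. split; lra.
    + cbv beta. change (cc 0) with 1. change (INR 0) with 0. rewrite Rplus_0_l. unfold gZ. pose proof (pos_INR k); pose proof (cc_pos (S k)). field. split; lra.
  - eapply is_series_val. apply is_series_minus''. apply series_invcc. apply series_zeta. field.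
Qed.

Lemma finite_series (b : nat -> R) m : (forall k, (m <= k)%nat -> b k = 0) -> is_series b (sumR b m).
Proof. intros H. apply is_series_sumR.
  apply (is_lim_seq_incr_n (sumR b) m). apply is_lim_seq_ext with (fun _ => sumR b m).
  2: apply is_lim_seq_const. intros N. induction N. simpl; auto.
  replace (S N + m)%nat with (S (N + m)) by lia. simpl. rewrite IHN, H. ring. lia. Qed.

Definition a3 n k := if (k <=? n)%nat then cc (S n) / ((INR k + 1) * (INR n + 2)) else 0.

Lemma a3_part k N : sumR (fun n => a3 n k) (k + N) = 2 / (INR k + 1) * (cc (S k) - cc (S (k + N))).
Proof. induction N.
  - rewrite Nat.add_0_r. rewrite (sumR_ext _ (fun _ => 0)). rewrite sumR_zero. ring.
    intros n Hn. unfold a3. destruct (Nat.leb_spec k n). lia. auto.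
  - replace (k + S N)%nat with (S (k + N)) by lia. cbn [sumR]. rewrite IHN. unfold a3.
    destruct (Nat.leb_spec k (k + N)). 2: lia.
    rewrite (cc_S (S (k + N))). rewrite S_INR. pose proof (pos_INR k); pose proof (pos_INR (k + N)).
    field. split; lra.
Qed.

Lemma T3_series : is_series (fun n => cc (S n) / (INR n + 2) * Hm (S n)) (4 * ln 2).
Proof.
  apply (tonelli a3 _ (fun k => 2 * (cc (S k) / (INR k + 1)))).
  - intros n k. unfold a3. destruct (k <=? n)%nat. pose proof (cc_pos (S n)); pose proof (pos_INR k); pose proof (pos_INR n).
    apply Rdiv_le_0_compat. lra. nra. lra.
  - intros n. eapply is_series_val. apply (finite_series _ (S n)).
    intros k Hk. unfold a3. destruct (Nat.leb_spec k n). lia. auto.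
    unfold Hm. rewrite <- sumR_scal. apply sumR_ext. intros k Hk. unfold a3. destruct (Nat.leb_spec k n). 2: lia.
    pose proof (pos_INR k); pose proof (pos_INR n). field. lra.
  - intros k. apply is_series_sumR. apply (is_lim_seq_incr_n _ k).
    apply is_lim_seq_ext with (fun N => 2 / (INR k + 1) * (cc (S k) - cc (S (k + N)))).
    { intros N. cbv beta. replace (N + k)%nat with (k + N)%nat by lia. rewrite a3_part. auto. }
    replace (2 * (cc (S k) / (INR k + 1))) with (2 / (INR k + 1) * (cc (S k) - 0)) by (field; pose proof (pos_INR k); lra).
    apply (is_lim_seq_scal_l _ (2 / (INR k + 1)) (cc (S k) - 0)). apply is_lim_seq_minus'. apply is_lim_seq_const.
    apply is_lim_seq_ext with (fun N => cc (N + S k)). intros; f_equal; lia.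
    apply -> (is_lim_seq_incr_n cc (S k)). apply cc_lim.
  - eapply is_series_val. apply is_series_scal'. apply series_ln2. ring.
Qed.

Lemma harmonic_Hm n : harmonic n = Hm n.
Proof. induction n.
  - unfold harmonic. rewrite sum_n_m_zero by lia. reflexivity.
  - unfold harmonic in *. rewrite sum_n_Sm by lia. rewrite IHn. rewrite Hm_S, S_INR. reflexivity.
Qed.

Lemma cb_eq n : central_binom n = cc n * 2 ^ (2 * n).
Proof. unfold central_binom, Binomial.C. induction n.
  - simpl. field.
  - replace (2 * S n - S n)%nat with (S n) by lia. replace (2 * n - n)%nat with n in IHn by lia.
    replace (2 * S n)%nat with (S (S (2 * n))) by lia.
    rewrite !fact_simpl. rewrite !mult_INR.
    assert (Hf : 0 < INR (Factorial.fact n)) by (apply INR_fact_lt_0).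
    assert (Hf2 : 0 < INR (Factorial.fact (2*n))) by (apply INR_fact_lt_0).
    replace (INR (Factorial.fact (2 * n))) with (cc n * 2 ^ (2 * n) * (INR (Factorial.fact n) * INR (Factorial.fact n))).
    2: { rewrite <- IHn. field. lra. }
    rewrite cc_S. simpl pow. rewrite !S_INR, mult_INR. simpl INR. pose proof (pos_INR n).
    field. lra.
Qed.

Lemma summand_eq m : summand (S m) = cc (S m) * (Hm (S m) / INR (S m)) - cc (S m) / (INR m + 2) * Hm (S m).
Proof. unfold summand. rewrite harmonic_Hm, cb_eq. rewrite S_INR. pose proof (pos_INR m).
  assert (0 < 2 ^ (2 * S m)) by (apply pow_lt; lra). field. split; lra. Qed.

Theorem mainTheorem2 :
  is_series (fun m : nat => summand (S m)) (PI ^ 2 / 3 - 4 * ln 2).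
Proof.
  eapply is_series_ext'. 2: apply (is_series_minus'' _ _ _ _ T1_series T3_series).
  intros m. rewrite summand_eq. reflexivity.
Qed.
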